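(* If $\sigma$ is a subgame perfect equilibrium in $(\mathcal{X},x_0)$, then $\Lambda^*(v)\neq\emptyset$ for every vertex $v$ of $X$ reachable from $x_0$, and $\langle\sigma\rangle_{x_0}\in\Lambda^*(x_0)$.
   Context: Games: an arena $G=(\Pi,V,(V_i)_{i\in\Pi},E)$ has finite player set $\Pi$, finite vertex set $V$ ($|V|\ge2$, $|\Pi|\le|V|$), partition $(V_i)$ and edges $E$ with every vertex having a successor. A quantitative reachability game has targets $F_i\subseteq V$ and $\mathrm{Cost}_i(\rho)=$ least $k$ with $\rho_k\in F_i$ (or $+\infty$). Strategies map histories ending in $V_i$ to successors; a profile $\sigma$ has outcome $\langle\sigma\rangle_{v_0}$. $\sigma$ is a Nash equilibrium if no player can strictly decrease his cost of the outcome by unilaterally changing his strategy; it is a subgame perfect equilibrium if for every history $hv$ from the initial vertex, $\sigma_{|h}$ ($\sigma_{i|h}(h')=\sigma_i(hh')$) is a Nash equilibrium in the game from $v$ with costs $\rho\mapsto\mathrm{Cost}_i(h\rho)$. Extended game of $(\mathcal{G},v_0)$: $\mathcal{X}$ is the reachability game on arena $X$ with $V^X=V\times2^\Pi$, $((v,I),(v',I'))\in E^X$ iff $(v,v')\in E$ and $I'=I\cup\{i:v'\in F_i\}$, $(v,I)\in V^X_i$ iff $v\in V_i$, targets $F^X_i=\{(v,I):i\in I\}$; $x_0=(v_0,\{i:v_0\in F_i\})$. $I(u)$ is the second component of $u$. $\mathcal{I}$ is the set of $I$ with some $(v,I)$ reachable from $x_0$, $N=|\mathcal{I}|$, and $J_1<\dots<J_N$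 a fixed total order of $\mathcal{I}$ extending $I<I'$ iff $I\ne I'$ and some $(v',I')$ is reachable from some $(v,I)$. $V^{\ge J_n}=\{(v,J_m):v\in V,m\ge n\}$. Labelings: for $\lambda:V^X\to\mathbb{N}\cup\{+\infty\}$, a play $\rho$ of $X$ is $\lambda$-consistent if $\mathrm{Cost}_i(\rho_{\ge n})\le\lambda(\rho_n)$ for all $n$ and $i$ with $\rho_n\in V^X_i$. $\lambda^0(u)=0$ if $u\in V^X_i$ and $i\in I(u)$, else $+\infty$. The update of $\lambda^k$ w.r.t. $V^{\ge J_n}$ keeps values outside $V^{\ge J_n}$ and for $u\in V^{\ge J_n}\cap V^X_i$ sets $\lambda^{k+1}(u)=0$ if $i\in I(u)$, otherwise $1+\min_{(u,u')\in E^X}\sup\{\mathrm{Cost}_i(\rho):\rho\in\Lambda^k(u')\}$, $\Lambda^k(u')$ being the $\lambda^k$-consistent plays from $u'$ and $1+(+\infty)=+\infty$. The sequence is generated by $n_0=N$, $\lambda^{k+1}=$ update of $\lambda^k$ w.r.t. $V^{\ge J_{n_k}}$, $n_{k+1}=n_k-1$ if $\lambda^{k+1}=\lambda^k$ and $n_k>1$, else $n_{k+1}=n_k$. It eventually becomes constant, equal to $\lambda^*$; $\Lambda^*(v)$ is the set of $\lambda^*$-consistent plays from $v$. *)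

(* Defs.v *)
From mathcomp Require Import all_boot.
From Stdlib Require Import ClassicalEpsilon.
Set Implicit Arguments. Unset Strict Implicit. Unset Printing Implicit Defensive.

(* N ∪ {+oo}: Some n = n, None = +oo *)
Notation ninf := (option nat).
Definition ninf_le (a b : ninf) : bool :=
  match a, b with
  | _, None => true
  | None, Some _ => false
  | Some m, Some n => (m <= n)%N
  end.
Definition ninf_succ (a : ninf) : ninf := omap S a.
Definition ninf_min (a b : ninf) : ninf := if ninf_le a b then a else b.
(* supremum in the complete lattice N ∪ {+oo} (sup of the empty set is 0) *)
Definition is_lub (S : ninf -> Prop) (s : ninf) : Prop :=
  (forall x, S x -> ninf_le x s) /\
  (forall b, (forall x, S x -> ninf_le x b) -> ninf_le s b).
Definition ninf_sup (S : ninf -> Prop) : ninf := epsilon (inhabits None) (is_lub S).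

Section Games.
Variables (T Pl : finType) (owner : T -> Pl) (E : rel T).

Definition is_play (rho : nat -> T) : Prop := forall k, E (rho k) (rho k.+1).
Definition play_from (v : T) (rho : nat -> T) : Prop := rho 0 = v /\ is_play rho.

Definition cost (Fi : {set T}) (rho : nat -> T) : ninf :=
  match excluded_middle_informative (exists k, rho k \in Fi) with
  | left H => Some (@ex_minn (fun k => rho k \in Fi) H)
  | right _ => None
  end.

Definition suffix (rho : nat -> T) (n : nat) : nat -> T := fun k => rho (n + k).
Definition prepend (h : seq T) (rho : nat -> T) : nat -> T :=
  fun k => if k < size h then nth (rho 0) h k else rho (k - size h).

(* a strategy maps a history  rcons h v  (v = last vertex) to a successor *)
Definition strategy := seq T -> T -> T.
Definition valid_strategy (i : Pl) (s : strategy) : Prop :=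
  forall h v, owner v = i -> E v (s h v).
Definition profile := Pl -> strategy.

(* outcome of the profile sg after history prefix h, from vertex v:
   this is <sg_{|h}>_v *)
Definition outcome (sg : profile) (h : seq T) (v : T) : nat -> T :=
  fun k => (iter k (fun hv : seq T * T =>
                      (rcons hv.1 hv.2, sg (owner hv.2) hv.1 hv.2)) (h, v)).2.

Definition deviate (sg : profile) (i : Pl) (tau : strategy) : profile :=
  fun j => if j == i then tau else sg j.

Variable (F : Pl -> {set T}).

(* sg_{|h} is a Nash equilibrium in the game from v with costs rho |-> Cost_i(h rho) *)
Definition NE_after (sg : profile) (h : seq T) (v : T) : Prop :=
  forall i tau, valid_strategy i tau ->
    ninf_le (cost (F i) (prepend h (outcome sg h v)))
            (cost (F i) (prepend h (outcome (deviate sg i tau) h v))).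

Definition is_history (v0 : T) (h : seq T) (v : T) : bool :=
  match h with
  | [::] => v == v0
  | x :: t => (x == v0) && path E x (rcons t v)
  end.

Definition SPE (sg : profile) (v0 : T) : Prop :=
  (forall i, valid_strategy i (sg i)) /\
  forall h v, is_history v0 h v -> NE_after sg h v.

End Games.

Section Extended.
Variables (V Pl : finType) (owner : V -> Pl) (E : rel V) (F : Pl -> {set V}) (v0 : V).

Definition XV := (V * {set Pl})%type.
Definition Xowner (u : XV) : Pl := owner u.1.
Definition Xedge : rel XV :=
  fun u u' => E u.1 u'.1 && (u'.2 == u.2 :|: [set i | u'.1 \in F i]).
Definition XF (i : Pl) : {set XV} := [set u : XV | i \in u.2].
Definition x0 : XV := (v0, [set i | v0 \in F i]).
Definition Xcost (i : Pl) (rho : nat -> XV) : ninf := cost (XF i) rho.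

Definition consistent (lam : {ffun XV -> ninf}) (rho : nat -> XV) : Prop :=
  forall n, ninf_le (Xcost (Xowner (rho n)) (suffix rho n)) (lam (rho n)).
Definition Lambda (lam : {ffun XV -> ninf}) (u : XV) (rho : nat -> XV) : Prop :=
  play_from Xedge u rho /\ consistent lam rho.

Definition lam0 : {ffun XV -> ninf} :=
  [ffun u => if Xowner u \in u.2 then Some 0 else None].

(* the total order J_1 < ... < J_N, given as the duplicate-free list [J_1; ...; J_N] *)
Variable J : seq {set Pl}.

Definition valid_order : Prop :=
  uniq J /\
  (forall I, I \in J <-> exists v, connect Xedge x0 (v, I)) /\
  (forall I I', I \in J -> I' \in J -> I != I' ->
     (exists v v', connect Xedge (v, I) (v', I')) -> index I J < index I' J).

(* u \in V^{>= J_n}  (n is 1-based, J_n = nth set0 J n.-1) *)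
Definition ge_block (n : nat) (u : XV) : bool := (u.2 \in J) && (n.-1 <= index u.2 J).

Definition update (lam : {ffun XV -> ninf}) (n : nat) : {ffun XV -> ninf} :=
  [ffun u => if ge_block n u then
               (if Xowner u \in u.2 then Some 0 else
                ninf_succ (foldr (fun u' acc =>
                   ninf_min (ninf_sup (fun c => exists rho,
                               Lambda lam u' rho /\ c = Xcost (Xowner u) rho)) acc)
                   None (enum [pred u' | Xedge u u'])))
             else lam u].

(* lamseq k = (lambda^k, n_k) *)
Fixpoint lamseq (k : nat) : {ffun XV -> ninf} * nat :=
  match k with
  | 0 => (lam0, size J)
  | k'.+1 => let: (l, n) := lamseq k' in
             let l' := update l n in
             (l', if (l' == l) && (1 < n) then n.-1 else n)
  end.

End Extended.

(* Main.v *)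
Require Import Defs.
From mathcomp Require Import all_boot.
From Stdlib Require Import ClassicalEpsilon FunctionalExtensionality.
Set Implicit Arguments. Unset Strict Implicit. Unset Printing Implicit Defensive.

Lemma ninf_le_refl a : ninf_le a a.
Proof. by case: a => //= n. Qed.

Lemma ninf_le_trans a b c : ninf_le a b -> ninf_le b c -> ninf_le a c.
Proof.
case: a => [a|]; case: b => [b|]; case: c => [c|] //=.
exact: leq_trans.
Qed.

Lemma ninf_le_add m a b :
  ninf_le (omap (addn m) a) (omap (addn m) b) = ninf_le a b.
Proof. by case: a => [a|]; case: b => [b|] //=; rewrite leq_add2l. Qed.

Lemma lub_exists (S : ninf -> Prop) : exists s, is_lub S s.
Proof.
pose P := fun b => if excluded_middle_informative
   (forall x, S x -> ninf_le x (Some b)) then true else false.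
case: (classic (exists b, P b)) => [exP|nexP].
  exists (Some (ex_minn exP)); case: ex_minnP => m Pm Hmin; split.
    by move: Pm; rewrite /P; case: excluded_middle_informative.
  case=> [b|] // Hb /=; apply: Hmin; rewrite /P.
  by case: excluded_middle_informative.
exists None; split; first by case.
case=> [b|] // Hb; exfalso; apply: nexP; exists b; rewrite /P.
by case: excluded_middle_informative.
Qed.

Lemma le_sup (S : ninf -> Prop) x : S x -> ninf_le x (ninf_sup S).
Proof.
move=> Sx; rewrite /ninf_sup.
have [H _] := epsilon_spec (inhabits None) (is_lub S) (lub_exists S).
exact: H.
Qed.

Section CostLemmas.
Variable T : finType.

Lemma cost_cases (Fi : {set T}) rho :
  (cost Fi rho = None /\ forall k, rho k \notin Fi) \/
  (exists k, [/\ cost Fi rho = Some k, rho k \in Fi & forall j, j < k -> rho j \notin Fi]).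
Proof.
rewrite /cost; case: excluded_middle_informative => [H|H].
  right; case: ex_minnP => m Hm Hmin; exists m; split => // j Hj.
  by apply/negP => Hin; have := Hmin j Hin; rewrite leqNgt Hj.
left; split => // k; apply/negP => Hk; apply: H; by exists k.
Qed.

Lemma cost_shift (Fi : {set T}) rho m :
  (forall j, j < m -> rho j \notin Fi) ->
  cost Fi rho = omap (addn m) (cost Fi (Defs.suffix rho m)).
Proof.
move=> Hm.
case: (cost_cases Fi (Defs.suffix rho m)) => [[-> Hn]|[k [-> Hk Hj]]].
  case: (cost_cases Fi rho) => [[-> _]|[k [_ Hk _]]] //.
  case: (ltnP k m) => Hkm; first by rewrite (negPf (Hm _ Hkm)) in Hk.
  by have := Hn (k - m); rewrite /Defs.suffix subnKC // Hk.
case: (cost_cases Fi rho) => [[_ Hn]|[k' [-> Hk' Hj']]].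
  by have := Hn (m + k); rewrite -/(Defs.suffix rho m k) Hk.
congr Some; apply/eqP; rewrite eqn_leq; apply/andP; split.
  by rewrite leqNgt; apply/negP => /Hj'; rewrite -/(Defs.suffix rho m k) Hk.
rewrite leqNgt; apply/negP => Hlt.
case: (ltnP k' m) => Hkm; first by rewrite (negPf (Hm _ Hkm)) in Hk'.
have : k' - m < k by rewrite ltn_subLR.
by move/Hj; rewrite /Defs.suffix subnKC // Hk'.
Qed.

Lemma cost_prepend (Fi : {set T}) h rho :
  (forall x, x \in h -> x \notin Fi) ->
  cost Fi (prepend h rho) = omap (addn (size h)) (cost Fi rho).
Proof.
move=> Hh; rewrite (cost_shift (m := size h)).
  have -> : Defs.suffix (prepend h rho) (size h) = rho => //.
  apply: functional_extensionality => k.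
  by rewrite /Defs.suffix /prepend ltnNge leq_addr /= addKn.
by move=> j Hj; rewrite /prepend Hj; apply: Hh; apply: mem_nth.
Qed.

Lemma cost_here (Fi : {set T}) rho : rho 0 \in Fi -> cost Fi rho = Some 0.
Proof.
move=> H; case: (cost_cases Fi rho) => [[_ Hn]|[k [-> Hk Hj]]].
  by rewrite (negPf (Hn 0)) in H.
by case: k Hk Hj => // k _ /(_ 0 isT); rewrite H.
Qed.

End CostLemmas.

Section GameLemmas.
Variables (T Pl : finType) (o : T -> Pl) (E : rel T).

Definition stp (sg : profile T Pl) (hv : seq T * T) :=
  (rcons hv.1 hv.2, sg (o hv.2) hv.1 hv.2).

Lemma outcome_step sg h v k :
  outcome o sg h v k.+1 = outcome o sg (rcons h v) (sg (o v) h v) k.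
Proof. by rewrite /outcome iterSr. Qed.

Lemma outcome0 sg h v : outcome o sg h v 0 = v.
Proof. by []. Qed.

Lemma outcome_suffix sg h v n :
  Defs.suffix (outcome o sg h v) n =
  outcome o sg (iter n (stp sg) (h, v)).1 (iter n (stp sg) (h, v)).2.
Proof.
apply: functional_extensionality => k.
rewrite /Defs.suffix /outcome addnC iterD.
by case: (iter n _ (h, v)).
Qed.

Lemma history_step x h v w :
  is_history E x h v -> E v w -> is_history E x (rcons h v) w.
Proof.
case: h => [|y t] /=.
  by move=> /eqP -> ->; rewrite eqxx.
by move=> /andP [-> Hp] Hvw /=; rewrite rcons_path Hp last_rcons.
Qed.

Lemma outcome_play sg h v :
  (forall i, valid_strategy o E i (sg i)) -> is_play E (outcome o sg h v).
Proof.
move=> Hv k; rewrite /outcome iterS.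
case: (iter k _ (h, v)) => h' w /=; exact: Hv.
Qed.

Lemma history_iter sg x h v n :
  (forall i, valid_strategy o E i (sg i)) -> is_history E x h v ->
  is_history E x (iter n (stp sg) (h, v)).1 (iter n (stp sg) (h, v)).2.
Proof.
move=> Hv; elim: n => [|n IH] //= Hh.
move: (IH Hh); case: (iter n _ _) => h' w /= Hh'.
by apply: history_step => //; apply: Hv.
Qed.

Lemma iter_agree sg sg' m k x :
  (forall h w, m < size h -> sg (o w) h w = sg' (o w) h w) ->
  m < size x.1 -> iter k (stp sg) x = iter k (stp sg') x.
Proof.
move=> Hag; elim: k x => [|k IH] x Hx //.
rewrite !iterSr; have -> : stp sg x = stp sg' x.
  by rewrite /stp Hag.
apply: IH; rewrite /stp /= size_rcons; exact: ltnW.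
Qed.

End GameLemmas.

Lemma ninf_le_succ a b : ninf_le (ninf_succ a) (ninf_succ b) = ninf_le a b.
Proof. by case: a => [a|]; case: b => [b|]. Qed.

Lemma omap_add1 a : omap (addn 1) a = ninf_succ a.
Proof. by case: a. Qed.

Lemma foldr_min_le (T : eqType) a (g : T -> ninf) l :
  (forall x, x \in l -> ninf_le a (ninf_succ (g x))) ->
  ninf_le a (ninf_succ (foldr (fun x acc => ninf_min (g x) acc) None l)).
Proof.
elim: l => [|x l IH] H /=; first by case: a {H}.
rewrite /ninf_min; case: ifP => _; first by apply: H; rewrite inE eqxx.
by apply: IH => y Hy; apply: H; rewrite inE Hy orbT.
Qed.

Section Main.
Variables (V Pl : finType) (owner : V -> Pl) (E : rel V)
    (F : Pl -> {set V}) (v0 : V) (J : seq {set Pl}) (sg : profile (XV V Pl) Pl).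

Notation XE := (Xedge E F).
Notation Xo := (Xowner owner).
Notation xx0 := (x0 F v0).

Lemma edge_sub u u' : XE u u' -> u.2 \subset u'.2.
Proof. by move=> /andP [_ /eqP ->]; apply: subsetUl. Qed.

Lemma path_sub x s : path XE x s -> forall w, w \in x :: s -> w.2 \subset (last x s).2.
Proof.
elim: s x => [|y s IH] x /=.
  by move=> _ w; rewrite inE => /eqP ->.
move=> /andP [Hxy Hp] w; rewrite inE => /orP [/eqP ->|Hw].
  exact: subset_trans (edge_sub Hxy) (IH y Hp y (mem_head _ _)).
exact: IH.
Qed.

Lemma hist_sub h v : is_history XE xx0 h v -> forall w, w \in h -> w.2 \subset v.2.
Proof.
case: h => [|x t] //= /andP [_ Hp] w Hw.
have := path_sub Hp; rewrite last_rcons; apply.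
by rewrite -rcons_cons mem_rcons inE Hw orbT.
Qed.

Lemma cons_of (lam : {ffun XV V Pl -> ninf}) :
  (forall i, valid_strategy Xo XE i (sg i)) ->
  (forall h v, is_history XE xx0 h v ->
     ninf_le (Xcost (Xo v) (outcome Xo sg h v)) (lam v)) ->
  forall h v, is_history XE xx0 h v -> Lambda owner E F lam v (outcome Xo sg h v).
Proof.
move=> Hval HP h v Hh; split; first by split => //; apply: outcome_play.
move=> n.
change (ninf_le (Xcost (Xo (iter n (stp Xo sg) (h, v)).2)
   (Defs.suffix (outcome Xo sg h v) n)) (lam (iter n (stp Xo sg) (h, v)).2)).
rewrite outcome_suffix; apply: HP; exact: history_iter.
Qed.

Lemma main_ind k : SPE Xo XE (@XF V Pl) sg xx0 ->
  forall h v, is_history XE xx0 h v ->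
  ninf_le (Xcost (Xo v) (outcome Xo sg h v)) ((lamseq owner E F J k).1 v).
Proof.
move=> [Hval HNE]; elim: k => [|k IH] h v Hh.
  rewrite /= /lam0 ffunE; case: ifP => Hin; last by case: Xcost.
  by rewrite /Xcost cost_here //= inE.
have HL := cons_of Hval IH.
rewrite [(lamseq _ _ _ _ k.+1)]/=.
move: IH HL; case: (lamseq owner E F J k) => l n IH HL /=.
rewrite /update ffunE; case: ifP => Hb; last exact: IH.
case: ifP => Hin; first by rewrite /Xcost cost_here //= inE.
set i := Xo v.
apply: foldr_min_le => u' Hu'; rewrite mem_enum inE in Hu'.
apply: (ninf_le_trans (b := ninf_succ (Xcost i (outcome Xo sg (rcons h v) u')))).
  pose tau : strategy (XV V Pl) :=
    fun h' w => if (h' == h) && (w == v) then u' else sg i h' w.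
  have Hvt : valid_strategy Xo XE i tau.
    move=> h' w Hw; rewrite /tau; case: ifP => [/andP [_ /eqP ->]|_] //.
    exact: Hval.
  have H := HNE h v Hh i tau Hvt.
  have Hnot : forall x, x \in h -> x \notin XF V i.
    move=> x Hx; rewrite inE; apply/negP => Hix.
    by move: Hin; rewrite -/i (subsetP (hist_sub Hh Hx) _ Hix).
  rewrite !cost_prepend // ninf_le_add in H.
  rewrite (cost_shift (m := 1) (rho := outcome Xo (deviate sg i tau) h v)) in H;
    last by case=> // _; rewrite /= inE Hin.
  rewrite outcome_suffix /= /deviate /= eqxx /tau !eqxx /= in H.
  have Heq : outcome Xo (fun j => if j == i then tau else sg j) (rcons h v) u' =
             outcome Xo sg (rcons h v) u'.
    apply: functional_extensionality => k'; rewrite /outcome.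
    congr (_.2); apply: (iter_agree (o := Xo) (sg := fun j => if j == i then tau else sg j) (sg' := sg) (m := size h)); last by rewrite /= size_rcons.
    move=> h' w Hs; case: eqP => [Ho|] //; rewrite Ho /tau.
    have -> : (h' == h) = false by apply/negP => /eqP E'; rewrite E' ltnn in Hs.
    by [].
  rewrite /tau in Heq; rewrite Heq omap_add1 in H; exact: H.
rewrite ninf_le_succ; apply: le_sup; exists (outcome Xo sg (rcons h v) u'); split => //.
by apply: HL; apply: history_step.
Qed.

End Main.

Theorem proposition2p13 (V Pl : finType) (owner : V -> Pl) (E : rel V)
    (F : Pl -> {set V}) (v0 : V) (J : seq {set Pl})
    (lamstar : {ffun XV V Pl -> option nat}) (sg : profile (XV V Pl) Pl) :
  (2 <= #|V|)%N -> (#|Pl| <= #|V|)%N -> (forall v, exists v', E v v') ->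
  valid_order E F v0 J ->
  (exists K, forall k, (K <= k)%N -> (lamseq owner E F J k).1 = lamstar) ->
  SPE (@Xowner V Pl owner) (Xedge E F) (@XF V Pl) sg (x0 F v0) ->
  (forall u, connect (Xedge E F) (x0 F v0) u ->
     exists rho, Lambda owner E F lamstar u rho) /\
  Lambda owner E F lamstar (x0 F v0) (outcome (@Xowner V Pl owner) sg [::] (x0 F v0)).
Proof.
move=> _ _ _ _ [K HK] Hspe.
have HP := main_ind J K Hspe.
rewrite HK // in HP.
have HL := cons_of Hspe.1 HP.
split; last by apply: HL; rewrite /= eqxx.
move=> u /connectP [p Hp ->]; case/lastP: p Hp => [|p y] Hp.
  by exists (outcome (Xowner owner) sg [::] (x0 F v0)); apply: HL; rewrite /= eqxx.
exists (outcome (Xowner owner) sg (x0 F v0 :: p) (last (x0 F v0) (rcons p y))).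
by apply: HL; rewrite last_rcons /= eqxx Hp.
Qed.
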